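(* Let $A\in\mathfrak{B}_{n\times m}$ with $r(A)=\langle x_1,\dots,x_n\rangle$, suppose $x_1=2^s-1$ for some integer $0\le s\le m$, and suppose $\zeta_1(A)=n$ (i.e. all rows of $A$ equal the first row). Then $A$ is canonical.
   Context: $\mathfrak{B}_{n\times m}$ denotes the set of all $n\times m$ matrices with entries in $\{0,1\}$. For $A=[a_{ij}]\in\mathfrak{B}_{n\times m}$, $r(A)=\langle x_1,\dots,x_n\rangle$ with $x_i=\sum_{j=1}^m a_{ij}2^{m-j}$; tuples are compared lexicographically. $\zeta_1(A)$ is the number of indices $k$ with $x_k=x_1$. $A\sim B$ means $A=XBY$ for permutation matrices $X,Y$. $A$ is canonical if $r(A)$ is the lexicographically minimal element of $\{r(B)\mid B\sim A\}$. *)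

(* Defs.v *)
From mathcomp Require Import all_boot all_order all_fingroup all_algebra.
Set Implicit Arguments. Unset Strict Implicit. Unset Printing Implicit Defensive.

Definition bmatrix (n m : nat) := 'M[bool]_(n, m).

(* x_i = sum_{j=1}^m a_ij 2^(m-j); with 0-indexed columns j : 'I_m this is 2^(m-1-j). *)
Definition row_val (n m : nat) (A : bmatrix n m) (i : 'I_n) : nat :=
  \sum_(j < m) (A i j : nat) * 2 ^ (m - j.+1).

Definition rA (n m : nat) (A : bmatrix n m) : seq nat :=
  [seq row_val A i | i <- enum 'I_n].

Fixpoint lex_le (s t : seq nat) : bool :=
  match s, t with
  | [::], _ => true
  | _ :: _, [::] => false
  | x :: s', y :: t' => (x < y) || ((x == y) && lex_le s' t')
  end.

Definition zeta1 (n m : nat) (hn : 0 < n) (A : bmatrix n m) : nat :=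
  #|[set k : 'I_n | row_val A k == row_val A (Ordinal hn)]|.

(* A ~ B iff A = X B Y with X, Y permutation matrices, i.e. A is obtained
   from B by permuting rows and columns. *)
Definition bequiv (n m : nat) (A B : bmatrix n m) : Prop :=
  exists (s : 'S_n) (t : 'S_m), A = (\matrix_(i, j) B (s i) (t j))%R.

Definition canonical (n m : nat) (A : bmatrix n m) : Prop :=
  forall B : bmatrix n m, bequiv B A -> lex_le (rA A) (rA B).

(* Main.v *)
Require Import Defs.
From mathcomp Require Import all_boot all_order all_fingroup all_algebra.
From mathcomp Require Import zify.

Definition V (m : nat) (f : 'I_m -> bool) : nat :=
  \sum_(j < m) (f j : nat) * 2 ^ (m - j.+1).
Definition C (m : nat) (f : 'I_m -> bool) : nat := \sum_(j < m) (f j : nat).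
Arguments V {m}. Arguments C {m}.

Lemma V_S m (f : 'I_m.+1 -> bool) :
  V f = (f ord0 : nat) * 2 ^ m + V (fun j => f (lift ord0 j)).
Proof. by rewrite /V big_ord_recl subn1 /=. Qed.

Lemma C_S m (f : 'I_m.+1 -> bool) :
  C f = (f ord0 : nat) + C (fun j => f (lift ord0 j)).
Proof. by rewrite /C big_ord_recl. Qed.

Lemma V_lt m (f : 'I_m -> bool) : V f < 2 ^ m.
Proof.
elim: m f => [|m IH] f; first by rewrite /V big_ord0.
rewrite V_S expnS; have := IH (fun j => f (lift ord0 j)).
case: (f ord0) => /=; lia.
Qed.

Lemma C_le m (f : 'I_m -> bool) : C f <= m.
Proof.
elim: m f => [|m IH] f; first by rewrite /C big_ord0.
rewrite C_S; have := IH (fun j => f (lift ord0 j)); case: (f ord0) => /=; lia.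
Qed.

Lemma V_ge m (f : 'I_m -> bool) : 2 ^ C f - 1 <= V f.
Proof.
elim: m f => [|m IH] f; first by rewrite /V /C !big_ord0.
rewrite V_S C_S; have := IH (fun j => f (lift ord0 j)).
have := @C_le _ (fun j => f (lift ord0 j)).
set c := C _; set v := V _ => Hc Hv.
case: (f ord0) => /=; last by rewrite add0n mul0n add0n.
rewrite add1n mul1n expnS.
have : 2 ^ c <= 2 ^ m by rewrite leq_exp2l.
lia.
Qed.

Lemma V_eq m (f : 'I_m -> bool) s : s <= m -> V f = 2 ^ s - 1 -> C f = s.
Proof.
elim: m f s => [|m IH] f s; first by rewrite leqn0 => /eqP -> ; rewrite /C big_ord0.
rewrite V_S C_S; have := @V_lt _ (fun j => f (lift ord0 j)).
have := IH (fun j => f (lift ord0 j)).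
set c := C _; set v := V _ => IH' Hv Hs.
rewrite succnK in Hv.
have Hp : 0 < 2 ^ s by rewrite expn_gt0.
case: (ltnP s m.+1) => Hsm.
  have Hsm' : s <= m by [].
  have : 2 ^ s <= 2 ^ m by rewrite leq_exp2l.
  case: (f ord0) => /= H Hv'.
    lia.
  by rewrite add0n; apply: IH'; lia.
have -> : s = m.+1 by lia.
rewrite expnS.
have Hp' : 0 < 2 ^ m by rewrite expn_gt0.
case: (f ord0) => /= Hv'.
  rewrite add1n; congr S; apply: IH' => //; lia.
lia.
Qed.

Lemma C_perm m (f : 'I_m -> bool) (t : 'S_m) : C (fun j => f (t j)) = C f.
Proof. by rewrite /C [RHS](reindex_inj (@perm_inj _ t)). Qed.

Lemma lex_nseq x k t : size t = k -> all (fun y => x <= y) t -> lex_le (nseq k x) t.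
Proof.
elim: t k => [|y t IH] [|k] //= [Hk] /andP [Hxy Ht].
rewrite leq_eqVlt in Hxy; case/orP: Hxy => [/eqP <-|->] //.
by rewrite eqxx IH // orbT.
Qed.

Theorem proposition7 (n m : nat) (hn : 0 < n) (A : bmatrix n m) (s : nat) :
  s <= m ->
  row_val A (Ordinal hn) = 2 ^ s - 1 ->
  zeta1 hn A = n ->
  canonical A.
Proof.
move=> Hsm Hrow Hz.
have Hall : forall i, row_val A i = 2 ^ s - 1.
  move=> i; rewrite -Hrow.
  set S := [set k : 'I_n | row_val A k == row_val A (Ordinal hn)].
  have : #|~: S| = 0.
    have := cardsC S; rewrite card_ord.
    move: Hz; rewrite /zeta1 -/S => ->; lia.
  move/cards0_eq => HS.
  have : i \notin ~: S by rewrite HS inE.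
  by rewrite !inE negbK => /eqP.
have HC : forall i, C (fun j => A i j) = s.
  by move=> i; apply: V_eq => //; rewrite -(Hall i).
move=> B [sg [t ->]].
have -> : rA A = nseq n (2 ^ s - 1).
  rewrite /rA (eq_map (g := fun _ => 2 ^ s - 1)) //.
  rewrite -[in RHS](size_enum_ord n); by elim: (enum 'I_n) => //= ? ? ->.
apply: lex_nseq; first by rewrite /rA size_map size_enum_ord.
apply/allP => y /mapP [i _ ->].
rewrite /row_val.
have -> : \sum_(j < m) ((\matrix_(i0, j0) A (sg i0) (t j0))%R i j : nat) * 2 ^ (m - j.+1)
   = V (fun j => A (sg i) (t j)).
  by rewrite /V; apply: eq_bigr => j _; rewrite mxE.
have := @V_ge _ (fun j => A (sg i) (t j)).
by rewrite (@C_perm _ (fun j => A (sg i) j)) HC.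
Qed.
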